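(* Let $N\ge 3$ be an integer, let $\Delta\theta^*=2\pi/N$, and let $P\neq 0$ be a real constant. Let $(\theta_k)_{k\ge1}$ and $(\omega_k)_{k\ge1}$ be real sequences with $\omega_k>0$ for all $k$, satisfying for every $k\ge 1$ $$\theta_{k+1}=\theta_k+\Delta\theta^*,\qquad \omega_{k+1}-\omega_k=P\sin\theta_k\left[\frac{1}{\omega_k}+\frac{1}{\omega_{k+1}}\right],$$ and the assumption $\omega_k^2>|P|$ for every $k\ge1$. If $\theta_1=0$, then the solution is periodic with period $N$: for every $k\ge 1$, $\theta_{k+N}=\theta_k+2\pi$ (so $\theta_{k+N}\equiv\theta_k \pmod{2\pi}$) and $\omega_{k+N}=\omega_k$; in particular $\omega_{N+1}=\omega_1$.
   Context: This is the ''discrete zero dynamics'' of a devil-stick with parameter $\phi=\pm\pi/2$; in the paper $P=\frac{g(\Delta\theta^* )^2}{2R\sin(\Delta\theta^* )}$ if $\phi=-\pi/2$ and $P=-\frac{g(\Delta\theta^* )^2}{2R\sin(\Delta\theta^* )}$ if $\phi=\pi/2$, where $g>0$ (gravity) and $R>0$ are constants. The hypothesis $\omega_k^2>|P|$ for all $k$ is the paper's Assumption 1. *)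

(* Defs.v *)
From Stdlib Require Import Reals.
Open Scope R_scope.

(* Main.v *)
Require Import Defs.
From Stdlib Require Import Reals.
From Stdlib Require Import Lra Lia Psatz.
Open Scope R_scope.

Lemma inj2 P s a b c : Rabs s <= 1 -> 0 < a -> 0 < b -> 0 < c ->
  b^2 > Rabs P -> c^2 > Rabs P ->
  b - a = P*s*(/a + /b) -> c - a = P*s*(/a + /c) -> b = c.
Proof.
  intros Hs Ha Hb Hc HbP HcP E1 E2.
  assert (E : (b - c) * (b*c + P*s) = 0).
  { assert (b - c = P*s*(/b - /c)) by lra.
    replace ((b - c) * (b*c + P*s)) with ((b-c)*(b*c) + P*s*(b - c)) by ring.
    rewrite H at 1. field; lra. }
  assert (Hbc : b*c > Rabs P).
  { assert (0 <= Rabs P) by apply Rabs_pos. nra. }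
  assert (Hps : Rabs (P*s) <= Rabs P).
  { rewrite Rabs_mult. assert (0 <= Rabs P) by apply Rabs_pos. nra. }
  assert (- Rabs (P*s) <= P*s).
  { pose proof (Rle_abs (- (P*s))). rewrite Rabs_Ropp in H. lra. }
  apply Rmult_integral in E. destruct E; lra.
Qed.

Lemma inj1 P s a a' b : Rabs s <= 1 -> 0 < a -> 0 < a' -> 0 < b ->
  a^2 > Rabs P -> a'^2 > Rabs P ->
  b - a = P*s*(/a + /b) -> b - a' = P*s*(/a' + /b) -> a = a'.
Proof.
  intros Hs Ha Ha' Hb HaP Ha'P E1 E2.
  apply (inj2 P (-s) b a a'); auto.
  - rewrite Rabs_Ropp; auto.
  - lra.
  - lra.
Qed.

Theorem lemma1 (N : nat) (P : R) (theta omega : nat -> R) :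
  (3 <= N)%nat ->
  P <> 0 ->
  (forall k : nat, (1 <= k)%nat -> 0 < omega k) ->
  (forall k : nat, (1 <= k)%nat ->
     theta (S k) = theta k + 2 * PI / INR N) ->
  (forall k : nat, (1 <= k)%nat ->
     omega (S k) - omega k = P * sin (theta k) * (/ omega k + / omega (S k))) ->
  (forall k : nat, (1 <= k)%nat -> (omega k)^2 > Rabs P) ->
  theta 1%nat = 0 ->
  forall k : nat, (1 <= k)%nat ->
    theta (k + N)%nat = theta k + 2 * PI /\ omega (k + N)%nat = omega k.
Proof.
  intros HN HP Hpos Hth Hom Hsq Hth1.
  assert (HNz : INR N <> 0) by (apply not_0_INR; lia).
  assert (Hf : forall m, theta (S m) = INR m * (2 * PI / INR N)).
  { induction m. - rewrite Hth1; simpl; ring.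
    - rewrite Hth by lia. rewrite IHm, S_INR. ring. }
  assert (Hsum : forall a b, (1 <= a)%nat -> (1 <= b)%nat -> (a + b = N + 2)%nat ->
            sin (theta b) = - sin (theta a)).
  { intros a b Ha Hb Hab.
    destruct a as [|a]; [lia|]. destruct b as [|b]; [lia|].
    assert (E : theta (S b) = 2*PI - theta (S a)).
    { rewrite !Hf. assert (INR b = INR N - INR a).
      { assert (b = N - a)%nat by lia. subst b. rewrite minus_INR by lia. ring. }
      rewrite H. field. auto. }
    rewrite E, sin_minus, sin_2PI, cos_2PI. ring. }
  assert (Hs1 : forall k, Rabs (sin (theta k)) <= 1).
  { intro k. apply Rabs_le. apply SIN_bound. }
  assert (Hsym : forall d, (forall i, (1 <= i)%nat -> (2*i + d = N + 3)%nat -> omega i = omega (i + d)%nat)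
                    /\ (forall i, (1 <= i)%nat -> (2*i + S d = N + 3)%nat -> omega i = omega (i + S d)%nat)).
  { induction d.
    - split.
      + intros i _ _. rewrite Nat.add_0_r. reflexivity.
      + intros i Hi Hi2.
        assert (Hz : sin (theta i) = 0).
        { pose proof (Hsum i i Hi Hi ltac:(lia)). lra. }
        pose proof (Hom i Hi) as E. rewrite Hz in E.
        replace (i + 1)%nat with (S i) by lia. lra.
    - destruct IHd as [IH0 IH]. split; [exact IH|].
      intros i Hi Hi2.
      assert (Hm : omega (S i) = omega (S i + d)%nat) by (apply IH0; lia).
      set (j := (i + S (S d))%nat).
      pose proof (Hom i Hi) as E1.
      assert (Hj1 : (1 <= S i + d)%nat) by lia.
      pose proof (Hom (S i + d)%nat Hj1) as E2.
      replace (S (S i + d)) with j in E2 by (unfold j; lia).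
      rewrite (Hsum i (S i + d)%nat Hi Hj1 ltac:(lia)) in E2.
      rewrite <- Hm in E2.
      apply (inj1 P (sin (theta i)) (omega i) (omega j) (omega (S i)));
        try (apply Hpos; unfold j; lia); try (apply Hsq; unfold j; lia); auto; lra. }
  assert (H1 : omega 1%nat = omega (N + 2)%nat).
  { destruct (Hsym (N+1)%nat) as [A _]. rewrite (A 1%nat) by lia. f_equal; lia. }
  assert (H2 : omega (N + 1)%nat = omega 1%nat).
  { assert (Hz : sin (theta (N+1)%nat) = 0).
    { rewrite (Hsum 1%nat (N+1)%nat) by lia. rewrite Hth1, sin_0. ring. }
    pose proof (Hom (N+1)%nat ltac:(lia)) as E. rewrite Hz in E.
    replace (S (N+1)) with (N+2)%nat in E by lia. lra. }
  assert (Hthp : forall k, (1 <= k)%nat -> theta (k + N)%nat = theta k + 2 * PI).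
  { intros k Hk. destruct k as [|m]; [lia|].
    replace (S m + N)%nat with (S (m + N)) by lia.
    rewrite !Hf, plus_INR. field. auto. }
  intros k Hk. split; [apply Hthp; auto|].
  induction k as [|k IH]; [lia|].
  destruct k as [|k].
  - replace (1 + N)%nat with (N + 1)%nat by lia. exact H2.
  - assert (IH' : omega (S k + N)%nat = omega (S k)) by (apply IH; lia).
    pose proof (Hom (S k) ltac:(lia)) as E1.
    pose proof (Hom (S k + N)%nat ltac:(lia)) as E2.
    rewrite Hthp in E2 by lia.
    rewrite sin_plus, sin_2PI, cos_2PI in E2.
    replace (sin (theta (S k)) * 1 + cos (theta (S k)) * 0) with (sin (theta (S k))) in E2 by ring.
    rewrite IH' in E2. replace (S (S k + N)) with (S (S k) + N)%nat in E2 by lia.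
    symmetry.
    apply (inj2 P (sin (theta (S k))) (omega (S k)) (omega (S (S k))) (omega (S (S k) + N)%nat));
      try (apply Hpos; lia); try (apply Hsq; lia); auto.
Qed.
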